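(* Let $d\geq 1$ and for $i=2,\ldots,d+1$ let $\sigma_i\in\Sigma_{d+1}$ be the transposition $(1\ i)$. Let $0<a_1<\cdots<a_d$ be integers forming a progression-free sequence, and let $m_d>4a_d$ be an integer. Consider the group $\Gamma_d=\Sigma_{d+1}\oplus\mathbb{Z}/m_d$ and its elements $\gamma_i=(\sigma_{i+1},a_i)$ for $i=1,\ldots,d$. Then $(\Gamma_d,\{\gamma_1,\ldots,\gamma_d\})$ satisfies condition $\mathcal{G}(4)$.
   Context: $\Sigma_{d+1}$ is the symmetric group on $\{1,\ldots,d+1\}$. A sequence $a_1<\cdots<a_d$ of integers is progression-free if $a_i+a_j=2a_k$ with $1\leq i,j,k\leq d$ implies $i=j=k$. For a finite group $\Gamma$ with identity $e$ and $D=\{\gamma_1,\ldots,\gamma_d\}\subseteq\Gamma$, and $p\geq 1$, the pair $(\Gamma,D)$ satisfies $\mathcal{R}(p)$ if for every sequence of indices $i_0,\ldots,i_{2p-1}\in\{1,\ldots,d\}$ the equality $\gamma_{i_0}\gamma_{i_1}^{-1}\gamma_{i_2}\gamma_{i_3}^{-1}\cdots\gamma_{i_{2p-2}}\gamma_{i_{2p-1}}^{-1}=e$ implies $i_l=i_{l+1}$ for some $l\in\{0,\ldots,2p-1\}$ (indices modulo $2p$); it satisfies $\mathcal{G}(p)$ if it satisfies $\mathcal{R}(1),\ldots,\mathcal{R}(p)$. *)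

(* Defs.v *)
From mathcomp Require Import all_boot all_order all_algebra all_fingroup.
Set Implicit Arguments. Unset Strict Implicit. Unset Printing Implicit Defensive.

Local Open Scope group_scope.

(* Condition R(p) for a finite group gT and an indexed family
   gam : 'I_d -> gT (gam i = gamma_{i+1}).  Indices are 0-based;
   the cyclic successor of l in 'I_(2p) is ordS l (= (l+1) mod 2p). *)
Definition condR (gT : finGroupType) (d : nat) (gam : 'I_d -> gT) (p : nat) : Prop :=
  forall idx : 'I_(p.*2) -> 'I_d,
    \prod_(l < p.*2) (if odd l then (gam (idx l))^-1 else gam (idx l)) = 1 ->
    exists l : 'I_(p.*2), idx l = idx (ordS l).

Definition condG (gT : finGroupType) (d : nat) (gam : 'I_d -> gT) (p : nat) : Prop :=
  forall q, (1 <= q <= p)%N -> condR gam q.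

Definition progression_free (d : nat) (a : nat -> nat) : Prop :=
  forall i j k, 1 <= i <= d -> 1 <= j <= d -> 1 <= k <= d ->
    (a i + a j = 2 * a k)%N -> i = j /\ j = k.

(* sigma_{i+2} = transposition (1 i+2) in Sigma_{d+1} (0-based: swaps 0 and i+1). *)
Definition sigma (d : nat) (i : 'I_d) : 'S_d.+1 := tperm ord0 (lift ord0 i).

(* gamma_{i+1} = (sigma_{i+2}, a_{i+1}) in Sigma_{d+1} x Z/m *)
Definition gamma (d m : nat) (a : nat -> nat) (i : 'I_d) : ('S_d.+1 * 'Z_m)%type :=
  (sigma i, inZp (a i.+1)).

(* Main.v *)
Require Import Defs.
From mathcomp Require Import all_boot all_order all_algebra all_fingroup.
From mathcomp Require Import zify ring.
Set Implicit Arguments. Unset Strict Implicit. Unset Printing Implicit Defensive.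

Definition swap (w y : nat) := if y == 0 then w else if y == w then 0 else y.
Definition Fl (ws : seq nat) (y : nat) := foldl (fun y w => swap w y) y ws.
Definition permok (ws : seq nat) := all (fun v => Fl ws v == v) (0 :: ws).
Definition adjb (ws : seq nat) :=
  all (fun l => nth 0 ws l != nth 0 ws (l.+1 %% size ws)) (iota 0 (size ws)).
Fixpoint gen (n : nat) : seq (seq nat) :=
  if n is n'.+1 then [seq rcons s v | s <- gen n', v <- iota 1 n] else [:: [::]].
Definition canonb (e : seq nat) :=
  all (fun l => nth 0 e (nth 0 e l).-1 == nth 0 e l) (iota 0 (size e)).
Definition chk n (goods : seq (seq nat)) :=
  all (fun e => [&& adjb e, permok e & canonb e] ==> (e \in goods)) (gen n).
Definition canon (xs : seq nat) := [seq (index x xs).+1 | x <- xs].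
Definition gof (xs : seq nat) (j : nat) := if j is k.+1 then nth 0 xs k else 0.

Lemma gen_mem n e : size e = n -> (forall l, l < n -> 0 < nth 0 e l <= l.+1) ->
  e \in gen n.
Proof.
elim: n e => [|n IH] e; first by case: e.
case/lastP: e => [|s v] //; rewrite size_rcons => -[Hs] H.
apply: allpairs_f.
  apply: IH => // l Hl; have := H l (ltnW Hl).
  by rewrite nth_rcons Hs Hl.
have := H n (ltnSn n); rewrite nth_rcons Hs ltnn eqxx mem_iota => /andP[H1 H2].
apply/andP; split => //; lia.
Qed.

Lemma nth_canon xs l : l < size xs -> nth 0 (canon xs) l = (index (nth 0 xs l) xs).+1.
Proof. by move=> Hl; rewrite (nth_map 0). Qed.

Lemma canon_nth xs l : l < size xs -> nth 0 xs l = nth 0 xs (nth 0 (canon xs) l).-1.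
Proof. by move=> Hl; rewrite nth_canon //= nth_index // mem_nth. Qed.

Lemma canon_eqv xs l k : l < size xs -> k < size xs ->
  (nth 0 (canon xs) l == nth 0 (canon xs) k) = (nth 0 xs l == nth 0 xs k).
Proof.
move=> Hl Hk; rewrite !nth_canon //; apply/eqP/eqP => [[E]|->//].
by rewrite (canon_nth Hl) (canon_nth Hk) !nth_canon //= E.
Qed.

Lemma adjb_canon xs : adjb (canon xs) = adjb xs.
Proof.
rewrite /adjb size_map; apply: eq_in_all => l; rewrite mem_iota /= => Hl.
by rewrite canon_eqv // ltn_pmod // (leq_ltn_trans _ Hl).
Qed.

Lemma canonb_canon xs : canonb (canon xs).
Proof.
apply/allP => l; rewrite size_map mem_iota /= => Hl.
rewrite nth_canon //= nth_canon ?index_mem ?mem_nth // nth_index ?mem_nth //.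
Qed.

Lemma canon_gen xs : canon xs \in gen (size xs).
Proof.
apply: gen_mem; first by rewrite size_map.
by move=> l Hl; rewrite nth_canon //= ltnS index_nth.
Qed.

Lemma map_gof xs : [seq gof xs j | j <- canon xs] = xs.
Proof. by rewrite -map_comp map_id_in // => x Hx /=; exact: nth_index. Qed.

Lemma gof_inj xs : all (fun x => 0 < x) xs -> {in 0 :: canon xs &, injective (gof xs)}.
Proof.
move=> Hpos u v; rewrite !inE.
case/orP => [/eqP->|/mapP[x Hx ->]]; case/orP => [/eqP->|/mapP[y Hy ->]] //=;
  rewrite ?nth_index //.
- by move=> E; move: (allP Hpos y Hy); rewrite -E.
- by move=> E; move: (allP Hpos x Hx); rewrite E.
- by move=> ->.
Qed.

Section Ren.
Variables (g : nat -> nat) (P : seq nat).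
Hypotheses (ginj : {in P &, injective g}) (g0 : g 0 = 0) (P0 : 0 \in P).

Lemma swap_in w y : w \in P -> y \in P -> swap w y \in P.
Proof. by rewrite /swap => Hw Hy; case: ifP => // _; case: ifP. Qed.

Lemma swap_ren w y : w \in P -> y \in P -> g (swap w y) = swap (g w) (g y).
Proof.
move=> Hw Hy; rewrite /swap.
case: (eqVneq y 0) => [->|y0]; first by rewrite g0 eqxx.
have gy0 : g y != 0 by apply: contra_neq y0 => E; apply: ginj => //; rewrite E g0.
rewrite (negbTE gy0).
case: (eqVneq y w) => [->|yw]; first by rewrite eqxx.
suff -> : (g y == g w) = false by [].
by apply/negbTE; apply: contra_neq yw; apply: ginj.
Qed.

Lemma Fl_ren ws y : all (mem P) ws -> y \in P ->
  g (Fl ws y) = Fl (map g ws) (g y) /\ Fl ws y \in P.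
Proof.
elim: ws y => [|w ws IH] y //= /andP[Hw Hws] Hy.
rewrite -swap_ren //; apply: IH => //; exact: swap_in.
Qed.
End Ren.

Lemma permok_canon xs : all (fun x => 0 < x) xs -> permok xs -> permok (canon xs).
Proof.
move=> Hpos Hp; apply/allP => v Hv.
have P0 : 0 \in 0 :: canon xs by rewrite inE eqxx.
have Hall : all (mem (0 :: canon xs)) (canon xs).
  by apply/allP => u Hu /=; rewrite inE Hu orbT.
have [E Hin] := Fl_ren (gof_inj Hpos) (erefl _) P0 Hall Hv.
rewrite map_gof in E.
have Hgv : gof xs v \in 0 :: xs.
  move: Hv; rewrite inE => /orP[/eqP->|Hv]; first by rewrite inE eqxx.
  apply/orP; right; have := map_f (gof xs) Hv; by rewrite map_gof.
move: (allP Hp _ Hgv) => /eqP E2; rewrite E2 in E.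
by apply/eqP; apply: (gof_inj Hpos).
Qed.

Lemma chk_use n goods xs : chk n goods -> size xs = n -> all (fun x => 0 < x) xs ->
  permok xs -> adjb xs -> canon xs \in goods.
Proof.
move=> /allP Hc Hs Hpos Hp Ha.
have := Hc _ (eq_ind _ (fun k => canon xs \in gen k) (canon_gen xs) _ Hs).
by rewrite adjb_canon Ha permok_canon // canonb_canon.
Qed.

Definition goods8 := [:: [:: 1;2;1;4;1;2;1;4]; [:: 1;2;1;4;2;1;2;4]; [:: 1;2;3;1;2;1;3;2];
  [:: 1;2;3;1;3;2;1;3]; [:: 1;2;3;2;1;2;3;2]; [:: 1;2;3;2;1;3;2;3]].
Lemma c8 : chk 8 goods8. Proof. vm_compute. reflexivity. Qed.
Lemma c6 : chk 6 [:: [:: 1;2;1;2;1;2]]. Proof. vm_compute. reflexivity. Qed.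
Lemma c4 : chk 4 [::]. Proof. vm_compute. reflexivity. Qed.
Lemma c2 : chk 2 [::]. Proof. vm_compute. reflexivity. Qed.
Section BPart.
Import GRing.Theory.
Local Open Scope group_scope.

Definition sE (a : nat -> nat) xs := sumn [seq a (nth 0 xs l) | l <- iota 0 (size xs) & ~~ odd l].
Definition sO (a : nat -> nat) xs := sumn [seq a (nth 0 xs l) | l <- iota 0 (size xs) & odd l].

Lemma fst_prod (g1 g2 : finGroupType) (r : seq nat) (F : nat -> g1 * g2) :
  (\prod_(l <- r) F l).1 = \prod_(l <- r) (F l).1.
Proof. by elim: r => [|l r IH]; rewrite ?big_nil ?big_cons //= -IH. Qed.
Lemma snd_prod (g1 g2 : finGroupType) (r : seq nat) (F : nat -> g1 * g2) :
  (\prod_(l <- r) F l).2 = \prod_(l <- r) (F l).2.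
Proof. by elim: r => [|l r IH]; rewrite ?big_nil ?big_cons //= -IH. Qed.

Lemma sigma_val d (i : 'I_d) (y : 'I_d.+1) : val (sigma i y) = swap (val i).+1 (val y).
Proof.
rewrite /sigma permE /= /swap.
case: (eqVneq y ord0) => [->|y0] //=.
have -> : (val y == 0) = false by apply/negbTE; apply: contra_neq y0 => E; apply: val_inj.
case: (eqVneq y (lift ord0 i)) => [->|yl] //=.
  by rewrite /bump leq0n add1n eqxx.
rewrite ifF //; apply/eqP => E; move/eqP: yl; apply; apply: val_inj.
by rewrite /= E /bump leq0n add1n.
Qed.

Lemma perm_list d (w : nat -> 'I_d) r (y : 'I_d.+1) :
  val ((\prod_(l <- r) (if odd l then (sigma (w l))^-1 else sigma (w l))) y)
  = Fl [seq (val (w l)).+1 | l <- r] (val y).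
Proof.
elim: r y => [|l r IH] y; first by rewrite big_nil perm1.
rewrite big_cons permM IH /=; congr Fl.
by case: (odd l); rewrite ?tpermV sigma_val.
Qed.

Lemma z_list m (b : nat -> nat) r :
  (\prod_(l <- r) (if odd l then (inZp (b l) : 'Z_m)^-1 else inZp (b l)))
  = ((sumn [seq b l | l <- r & ~~ odd l])%:R - (sumn [seq b l | l <- r & odd l])%:R)%R.
Proof.
elim: r => [|l r IH]; first by rewrite big_nil subrr.
rewrite big_cons IH.
have mulE : forall x y : 'Z_m, (x * y)%g = (x + y)%R by [].
have invE : forall x : 'Z_m, (x ^-1)%g = (- x)%R by [].
rewrite /=; case: (odd l) => /=; rewrite ?invE mulE -Zp_nat ?natrD; ring.
Qed.

Lemma reduce d m a n (idx : 'I_n.+1 -> 'I_d) :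
  1 < m ->
  \prod_(l < n.+1) (if odd l then (@gamma d m a (idx l))^-1 else gamma m a (idx l)) = 1 ->
  (forall l, idx l != idx (ordS l)) ->
  let xs := [seq (val (idx (inord l))).+1 | l <- iota 0 n.+1] in
  [/\ permok xs, adjb xs, sE a xs %% m = sO a xs %% m, size xs = n.+1 &
      all (fun x => 0 < x <= d) xs].
Proof.
move=> Hm Hp Hno xs.
have Hsz : size xs = n.+1 by rewrite size_map size_iota.
have Hnth : forall l, l < n.+1 -> nth 0 xs l = (val (idx (inord l))).+1.
  by move=> l Hl; rewrite (nth_map 0) ?size_iota // nth_iota.
pose F := fun l : nat => if odd l then (gamma m a (idx (inord l)))^-1 else gamma m a (idx (inord l)).
have Hp' : \prod_(l <- iota 0 n.+1) F l = 1.
  rewrite -[iota 0 n.+1]/(index_iota 0 n.+1) big_mkord -[RHS]Hp.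
  by apply: eq_bigr => l _; rewrite /F inord_val.
split => //.
- apply/allP => v Hv.
  have [y Hy] : exists y : 'I_d.+1, val y = v.
    move: Hv; rewrite inE => /orP[/eqP->|/mapP[l _ ->]]; first by exists ord0.
    by exists (lift ord0 (idx (inord l))).
  have := perm_list (fun l => idx (inord l)) (iota 0 n.+1) y.
  have -> : \prod_(l <- iota 0 n.+1) (if odd l then (sigma (idx (inord l)))^-1 else sigma (idx (inord l)))
          = (\prod_(l <- iota 0 n.+1) F l).1.
    by rewrite fst_prod; apply: eq_bigr => l _; rewrite /F; case: (odd l).
  by rewrite Hp' perm1 Hy => <-.
- apply/allP => l; rewrite Hsz mem_iota /= => Hl.
  have Hl2 : l.+1 %% n.+1 < n.+1 by rewrite ltn_mod.
  rewrite Hnth // Hnth // eqSS; have := Hno (inord l).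
  have -> : ordS (inord l) = inord (l.+1 %% n.+1) :> 'I_n.+1.
    by apply: val_inj; rewrite /= !inordK.
  by apply: contra_neq => E; apply: val_inj.
- have := congr1 snd Hp'; rewrite snd_prod /=.
  have -> : \prod_(l <- iota 0 n.+1) (F l).2
      = \prod_(l <- iota 0 n.+1) (if odd l then (inZp (a (val (idx (inord l))).+1) : 'Z_m)^-1
                                   else inZp (a (val (idx (inord l))).+1)).
    by apply: eq_bigr => l _; rewrite /F; case: (odd l).
  have E : forall P : pred nat, sumn [seq a (val (idx (inord l))).+1 | l <- iota 0 n.+1 & P l]
            = sumn [seq a (nth 0 xs l) | l <- iota 0 (size xs) & P l].
    move=> P; rewrite Hsz; congr sumn; apply/eq_in_map => l.
    by rewrite mem_filter mem_iota => /andP[_ /andP[_ Hl]]; rewrite Hnth.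
  rewrite z_list !E -/(sE a xs) -/(sO a xs).
  move: (sE a xs) (sO a xs) => u v.
  move=> /eqP; rewrite -[(1 : 'Z_m)%g]/(0 : 'Z_m)%R subr_eq0 => /eqP.
  by move/(congr1 val); rewrite !Zp_nat /= Zp_cast.
- by apply/allP => x /mapP[l _ ->] /=; rewrite ltn_ord.
Qed.
End BPart.

Lemma mono d (a : nat -> nat) : (forall i, 1 <= i < d -> a i < a i.+1) ->
  forall x, 0 < x <= d -> a x <= a d.
Proof.
move=> Ha x /andP[H0 Hd].
have : forall k, x + k <= d -> a x <= a (x + k).
  elim=> [|k IH] Hk; first by rewrite addn0.
  have Hk' : x + k <= d by lia.
  apply: leq_trans (IH Hk') _; rewrite addnS; apply: ltnW; apply: Ha; lia.
by move/(_ (d - x)); rewrite subnKC //; apply.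
Qed.

Lemma canon_fix xs e l : canon xs = e -> l < size xs -> nth 0 xs l = nth 0 xs (nth 0 e l).-1.
Proof. by move=> <-; apply: canon_nth. Qed.

Ltac pf_try Hpf N01 i j k :=
  have [? ?] := Hpf i j k ltac:(assumption) ltac:(assumption) ltac:(assumption) ltac:(lia);
  move/negP: N01; apply; apply/eqP; lia.

Ltac subst_vars :=
  repeat match goal with
  | H : ?x = ?x |- _ => clear H
  | H : ?x = ?y |- _ => is_var x; is_var y; subst x
  end.

Lemma fin8 d (a : nat -> nat) m xs :
  (forall i, 1 <= i < d -> a i < a i.+1) -> progression_free d a -> 4 * a d < m ->
  permok xs -> adjb xs -> sE a xs %% m = sO a xs %% m -> size xs = 8 ->
  all (fun x => 0 < x <= d) xs -> False.
Proof.
move=> Hmono Hpf Hm Hp Ha Hs Hsz Hb.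
have Hpos : all (fun x => 0 < x) xs by apply: sub_all Hb => x /andP[].
have := chk_use c8 Hsz Hpos Hp Ha.
case: xs Hsz Hp Ha Hs Hb Hpos => [|x0 [|x1 [|x2 [|x3 [|x4 [|x5 [|x6 [|x7 [|]]]]]]]]] // _ Hp Ha Hs Hb Hpos.
move: Hb => /= /and5P[B0 B1 B2 B3 /and5P[B4 B5 B6 B7 _]].
have N01 : x0 != x1 by move: Ha; rewrite /adjb /= => /andP[].
have L0 := mono Hmono B0; have L1 := mono Hmono B1; have L2 := mono Hmono B2;
have L3 := mono Hmono B3; have L4 := mono Hmono B4; have L5 := mono Hmono B5;
have L6 := mono Hmono B6; have L7 := mono Hmono B7.
move: Hs; rewrite /sE /sO /= !addn0 => Hs.
rewrite !modn_small in Hs; try lia.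
rewrite !inE => Hc.
repeat (case/orP: Hc => Hc); move/eqP: Hc => Hc;
have E1 := canon_fix (l:=1) Hc erefl; have E2 := canon_fix (l:=2) Hc erefl;
have E3 := canon_fix (l:=3) Hc erefl; have E4 := canon_fix (l:=4) Hc erefl;
have E5 := canon_fix (l:=5) Hc erefl; have E6 := canon_fix (l:=6) Hc erefl;
have E7 := canon_fix (l:=7) Hc erefl; simpl in E1, E2, E3, E4, E5, E6, E7;
clear Hc; subst_vars;
first [ pf_try Hpf N01 x0 x0 x1 | pf_try Hpf N01 x1 x3 x0 | pf_try Hpf N01 x0 x1 x3
      | pf_try Hpf N01 x0 x1 x2 | pf_try Hpf N01 x0 x2 x1 | pf_try Hpf N01 x1 x2 x0 ].
Qed.

Lemma fin6 d (a : nat -> nat) m xs :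
  (forall i, 1 <= i < d -> a i < a i.+1) -> progression_free d a -> 4 * a d < m ->
  permok xs -> adjb xs -> sE a xs %% m = sO a xs %% m -> size xs = 6 ->
  all (fun x => 0 < x <= d) xs -> False.
Proof.
move=> Hmono Hpf Hm Hp Ha Hs Hsz Hb.
have Hpos : all (fun x => 0 < x) xs by apply: sub_all Hb => x /andP[].
have := chk_use c6 Hsz Hpos Hp Ha.
case: xs Hsz Hp Ha Hs Hb Hpos => [|x0 [|x1 [|x2 [|x3 [|x4 [|x5 [|]]]]]]] // _ Hp Ha Hs Hb Hpos.
move: Hb => /= /and5P[B0 B1 B2 B3 /andP[B4 /andP[B5 _]]].
have N01 : x0 != x1 by move: Ha; rewrite /adjb /= => /andP[].
have L0 := mono Hmono B0; have L1 := mono Hmono B1; have L2 := mono Hmono B2;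
have L3 := mono Hmono B3; have L4 := mono Hmono B4; have L5 := mono Hmono B5.
move: Hs; rewrite /sE /sO /= !addn0 => Hs.
rewrite !modn_small in Hs; try lia.
rewrite !inE => /eqP Hc.
have E1 := canon_fix (l:=1) Hc erefl; have E2 := canon_fix (l:=2) Hc erefl;
have E3 := canon_fix (l:=3) Hc erefl; have E4 := canon_fix (l:=4) Hc erefl;
have E5 := canon_fix (l:=5) Hc erefl; simpl in E1, E2, E3, E4, E5.
clear Hc; subst_vars.
pf_try Hpf N01 x0 x0 x1.
Qed.

Lemma fin_small n xs goods : chk n goods -> goods = [::] -> size xs = n ->
  all (fun x => 0 < x) xs -> permok xs -> adjb xs -> False.
Proof. by move=> Hc Hg Hs Hpos Hp Ha; have := chk_use Hc Hs Hpos Hp Ha; rewrite Hg. Qed.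

Local Open Scope group_scope.

Theorem proposition5p6 (d : nat) (a : nat -> nat) (m : nat) :
  (1 <= d)%N ->
  (0 < a 1)%N ->
  (forall i, 1 <= i < d -> a i < a i.+1)%N ->
  progression_free d a ->
  (4 * a d < m)%N ->
  condG (@gamma d m a) 4.
Proof.
move=> Hd Ha1 Hmono Hpf Hm q /andP[q1 q4].
have := mono Hmono (x:=1) ltac:(lia); move=> Had.
have Hm1 : (1 < m)%N by lia.
have Hpos : forall xs : seq nat, all (fun x => 0 < x <= d)%N xs -> all (fun x => 0 < x)%N xs.
  by move=> xs; apply: sub_all => x /andP[].
case: q q1 q4 => [|[|[|[|[|q]]]]] // _ _ idx Hprod;
  (case: (boolP [exists l, idx l == idx (ordS l)]) => [/existsP[l /eqP E]|Hno];
    first by exists l);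
  exfalso;
  (have Hno' : forall l, idx l != idx (ordS l) by
    move=> l; apply: contraNneq Hno => E; apply/existsP; exists l; apply/eqP).
- have [Hp Ha Hs Hsz Hb] := @reduce d m a 1 idx Hm1 Hprod Hno'.
  exact: (fin_small c2 erefl Hsz (Hpos _ Hb) Hp Ha).
- have [Hp Ha Hs Hsz Hb] := @reduce d m a 3 idx Hm1 Hprod Hno'.
  exact: (fin_small c4 erefl Hsz (Hpos _ Hb) Hp Ha).
- have [Hp Ha Hs Hsz Hb] := @reduce d m a 5 idx Hm1 Hprod Hno'.
  exact: (fin6 Hmono Hpf Hm Hp Ha Hs Hsz Hb).
- have [Hp Ha Hs Hsz Hb] := @reduce d m a 7 idx Hm1 Hprod Hno'.
  exact: (fin8 Hmono Hpf Hm Hp Ha Hs Hsz Hb).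
Qed.
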